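(* Let $p\ge1$, $\phi_1,\dots,\phi_p:\mathbb Z\to\mathbb C$, integers $t>s$, $1\le m\le p$, and $n=t-s$. (i) For $1\le i\le n$, the cofactor of the $(i,1)$ entry (which is $\phi_{m+i-1}(s+i)$) of $\Phi^{(m)}_{t,s}$ equals $\xi_{t,s+i}$. (ii) For each entry in the last row of $\Phi^{(m)}_{t,s}$, written as $\phi_l(t)$ (so $l=n-j+1$ for the $(n,j)$ entry with $j\ge2$, and $l=m+n-1$ for the $(n,1)$ entry), its cofactor equals $\xi^{(m)}_{t-l,s}$.
   Context: Convention: $\phi_l(t)=0$ for $l>p$. For integers $t>s$ and $1\le m\le p$, $\Phi^{(m)}_{t,s}$ is the $(t-s)\times(t-s)$ lower Hessenberg matrix whose $(i,j)$ entry is: $\phi_{m+i-1}(s+i)$ if $j=1$; $-1$ if $j=i+1$; $\phi_{i-j+1}(s+i)$ if $2\le j\le i$; $0$ if $j>i+1$. For $t\ge s-p+1$: $\xi^{(m)}_{t,s}=\det\Phi^{(m)}_{t,s}$ if $t>s$; $\xi^{(m)}_{t,s}=1$ if $t=s-m+1$; $\xi^{(m)}_{t,s}=0$ if $s-p+1\le t\le s$, $t\ne s-m+1$. The principal determinant is $\xi_{t,s}=\xi^{(1)}_{t,s}$ (so $\xi_{t,t}=1$). The cofactor of the $(i,j)$ entry of a square matrix is $(-1)^{i+j}$ times the determinant of the matrix with row $i$ and column $j$ deleted. *)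

(* Defs.v *)
From mathcomp Require Import all_boot all_order all_algebra.
From mathcomp Require Import complex Rstruct.
Set Implicit Arguments. Unset Strict Implicit. Unset Printing Implicit Defensive.
Import Order.TTheory GRing.Theory Num.Theory.
Local Open Scope ring_scope.

Definition C : comNzRingType := (Rdefinitions.R)[i].

Section Defs.
Variable (F : comPzRingType).

Definition phiz (p : nat) (phi : nat -> int -> F) (l : nat) (t : int) : F :=
  if (l <= p)%N then phi l t else 0.

(* Phi^{(m)}_{t,s} with n = t - s, indices 0-based: row i' = i-1, column j' = j-1. *)
Definition PhiMx (p : nat) (phi : nat -> int -> F) (m : nat) (s : int) (n : nat)
  : 'M[F]_n :=
  \matrix_(i < n, j < n)
    if (j == 0 :> nat) then phiz p phi (m + i) (s + (i.+1)%:Z)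
    else if (j == i.+1 :> nat) then -1
    else if (j <= i)%N then phiz p phi (i - j).+1 (s + (i.+1)%:Z)
    else 0.

(* xi^{(m)}_{t,s}; for t < s - p + 1 (where the paper leaves it undefined) we put 0. *)
Definition xi (p : nat) (phi : nat -> int -> F) (m : nat) (t s : int) : F :=
  if s < t then \det (PhiMx p phi m s `|t - s|%N)
  else if t == s - m%:Z + 1 then 1 else 0.

End Defs.

(* Main.v *)
Require Import Defs.
From mathcomp Require Import all_boot all_order all_algebra.
From mathcomp Require Import complex Rstruct.
From mathcomp Require Import zify.
Import Order.TTheory GRing.Theory Num.Theory.
Local Open Scope ring_scope.

Lemma det_blk (R : comPzRingType) N k l (e : N = (k + l)%N) (M : 'M[R]_N) :
 (forall i j : 'I_N, (i < k)%N -> (k <= j)%N -> M i j = 0) ->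
 \det M = \det (\matrix_(i < k, j < k) M (cast_ord (esym e) (lshift l i)) (cast_ord (esym e) (lshift l j)))
   * \det (\matrix_(i < l, j < l) M (cast_ord (esym e) (rshift k i)) (cast_ord (esym e) (rshift k j))).
Proof.
subst N => /= H.
have -> : \matrix_(i < k, j < k) M (cast_ord (esym erefl) (lshift l i)) (cast_ord (esym erefl) (lshift l j)) = ulsubmx M.
  by apply/matrixP => x y; rewrite !mxE !cast_ord_id.
have -> : \matrix_(i < l, j < l) M (cast_ord (esym erefl) (rshift k i)) (cast_ord (esym erefl) (rshift k j)) = drsubmx M.
  by apply/matrixP => x y; rewrite !mxE !cast_ord_id.
rewrite -(det_lblock _ (dlsubmx M)); congr (\det _).
rewrite -{1}[M]submxK; congr block_mx.
apply/matrixP => x y; rewrite !mxE H //= ?ltn_ord //; lia.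
Qed.

Lemma det_ltri (R : comPzRingType) l (M : 'M[R]_l) :
  (forall i j : 'I_l, (i < j)%N -> M i j = 0) -> (forall i, M i i = -1) ->
  \det M = (-1) ^+ l.
Proof.
move=> H1 H2; rewrite det_trig.
  by rewrite (eq_bigr (fun _ => -1)) // prodr_const card_ord.
by apply/forallP => i; apply/forallP => j; apply/implyP => h; rewrite H1.
Qed.

Lemma sign_even (R : pzRingType) a b : ~~ odd (a + b) -> ((-1) ^+ a * (-1) ^+ b : R) = 1.
Proof. by move=> h; rewrite -exprD -signr_odd (negbTE h). Qed.

Lemma liftL n (i : 'I_n) (k : 'I_n.-1) : (k < i)%N -> nat_of_ord (lift i k) = k.
Proof. by move=> h; rewrite /= /bump leqNgt h. Qed.
Lemma liftR n (i : 'I_n) (k : 'I_n.-1) : (i <= k)%N -> nat_of_ord (lift i k) = k.+1.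
Proof. by move=> h; rewrite /= /bump h. Qed.
Lemma liftE n (i : 'I_n) (k : 'I_n.-1) : nat_of_ord (lift i k) = if (i <= k)%N then k.+1 else k.
Proof. by rewrite /= /bump; case: leqP. Qed.
Lemma det_size0 (R : comPzRingType) l (M : 'M[R]_l) : l = 0%N -> \det M = 1.
Proof. by move=> h; move: M; rewrite h => M; exact: det_mx00. Qed.
Lemma castE n m (e : n = m) (x : 'I_n) : nat_of_ord (cast_ord e x) = x.
Proof. by []. Qed.
Lemma lshiftE n m (x : 'I_n) : nat_of_ord (lshift m x) = x.
Proof. by []. Qed.
Lemma rshiftE n m (x : 'I_m) : nat_of_ord (rshift n x) = (n + x)%N.
Proof. by []. Qed.
Ltac ords := repeat match goal with x : 'I_?k |- _ =>
  lazymatch goal with _ : is_true (nat_of_ord x < k)%N |- _ => fail | _ =>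
  have := ltn_ord x; move=> ? end end.
Ltac crush := ords; rewrite ?mxE ?liftE ?castE ?lshiftE ?rshiftE;
  repeat match goal with |- context [if ?b then _ else _] =>
     lazymatch b with context [if _ then _ else _] => fail | _ =>
     let H := fresh "H" in destruct b eqn:H end end;
  try reflexivity; try (exfalso; lia);
  try (congr (phiz _ _ _ _); lia).

Theorem lemma1 (p : nat) (phi : nat -> int -> C) (t s : int) (m : nat) :
  (1 <= p)%N -> s < t -> (1 <= m)%N -> (m <= p)%N ->
  (forall i j : 'I_`|t - s|%N, nat_of_ord j = 0%N ->
     cofactor (PhiMx p phi m s `|t - s|%N) i j = xi p phi 1 t (s + (i.+1)%:Z)) /\
  (forall i j : 'I_`|t - s|%N, nat_of_ord i = (`|t - s|%N).-1 ->
     let l := if nat_of_ord j == 0%N then (m + `|t - s|%N - 1)%N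
              else (`|t - s|%N - j)%N in
     cofactor (PhiMx p phi m s `|t - s|%N) i j = xi p phi m (t - l%:Z) s).
Proof.
move=> hp hst hm hmp.
have [n ht] : exists n : nat, t = s + n%:Z.
  exists `|t - s|%N; rewrite gez0_abs ?subr_ge0 ?ltW //; lia.
rewrite {}ht in hst *.
have -> : absz (s + n%:Z - s)%R = n.
  by have -> : s + n%:Z - s = n%:Z by lia.
have hn : (0 < n)%N by lia.
split.
- move=> i j hj; rewrite /cofactor hj addn0.
  have hi := ltn_ord i.
  have e : (n.-1 = i + (n.-1 - i))%N by lia.
  rewrite (det_blk _ _ _ _ e); last first.
    by move=> x y hx hy; crush.
  rewrite det_ltri; last 2 first.
  + by move=> x y hxy; crush.
  + by move=> x; crush.
  rewrite mulrA sign_even ?mul1r; last by rewrite addnn odd_double.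
  rewrite /xi; case: ifP => h.
    have -> : absz (s + n%:Z - (s + (i.+1)%:Z))%R = (n.-1 - i)%N.
      by have -> : (s + n%:Z - (s + (i.+1)%:Z))%R = (n.-1 - i)%N%:Z by lia.
    congr (\det _); apply/matrixP => x y; crush.
  rewrite ifT; last by apply/eqP; lia.
  by apply: det_size0; lia.
- move=> i j hi l; rewrite /l /cofactor hi.
  have hj' := ltn_ord j.
  case: eqP => hj.
    rewrite det_ltri; last 2 first.
    + by move=> x y hxy; crush.
    + by move=> x; crush.
    rewrite hj addn0 sign_even; last by rewrite addnn odd_double.
    rewrite /xi ifF; last by lia.
    by rewrite ifT //; apply/eqP; lia.
  have e : (n.-1 = j + (n.-1 - j))%N by lia.
  rewrite (det_blk _ _ _ _ e); last first.
    by move=> x y hx hy; crush.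
  rewrite [_ * \det _]mulrC det_ltri; last 2 first.
  + by move=> x y hxy; crush.
  + by move=> x; crush.
  rewrite mulrA sign_even ?mul1r; last first.
    have -> : (n.-1 + j + (n.-1 - j) = n.-1 + n.-1)%N by lia.
    by rewrite addnn odd_double.
  rewrite /xi ifT; last by lia.
  have -> : absz (s + n%:Z - (n - j)%N%:Z - s)%R = j.
    by have -> : (s + n%:Z - (n - j)%N%:Z - s)%R = j%:Z by lia.
  by congr (\det _); apply/matrixP => x y; crush.
Qed.
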